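(* Let $x_1 \in X$ and stepsizes $\gamma_k > 0$ be given, and for $k \ge 1$ let \[ y_k = P_{x_k}(\gamma_k F(x_k)), \qquad x_{k+1} = P_{x_k}(\gamma_k F(y_k)). \] Then: (a) There exists $x^* \in X^*$ such that \[ -\frac{\gamma_k^2}{2\alpha}\|F(x_k) - F(y_k)\|_*^2 + V(x_k, y_k) \le V(x_k, x^* ) - V(x_{k+1}, x^* ). \] (b) If $F$ is Hölder continuous, i.e. $\|F(x) - F(y)\|_* \le L\|x-y\|^\nu$ for all $x, y\in X$ for some $L>0$ and $\nu \in (0,1]$, then there exists $x^* \in X^*$ such that \[ V(x_k,y_k) - 2^{\nu-1}L^2\gamma_k^2\alpha^{-(1+\nu)}\left[V(x_k,y_k)\right]^\nu \le V(x_k,x^* ) - V(x_{k+1},x^* ). \] In particular, if $F$ is Lipschitz continuous ($\nu = 1$), then \[ \left(1 - L^2\gamma_k^2\alpha^{-2}\right)V(x_k,y_k) \le V(x_k,x^* ) - V(x_{k+1},x^* ). \]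
   Context: $\mathbb{R}^n$ carries an inner product $\langle\cdot,\cdot\rangle$ and a norm $\|\cdot\|$ (not necessarily induced by the inner product), with dual norm $\|\cdot\|_*$. $X \subseteq \mathbb{R}^n$ is a nonempty closed convex set and $F: X \to \mathbb{R}^n$ is continuous. $X^*$ is the set of strong solutions of $\mathrm{VI}(X,F)$ (points $x^*\in X$ with $\langle F(x^* ), x - x^*\rangle \ge 0$ for all $x\in X$); it is assumed nonempty, and it is assumed (generalized monotonicity) that for every $x^* \in X^*$, $\langle F(x), x - x^*\rangle \ge 0$ for all $x \in X$. A distance generating function with modulus $\alpha>0$ w.r.t. $\|\cdot\|$ is a function $\omega: X \to \mathbb{R}$ that is convex and continuous on $X$, such that $X^o = \{x \in X : \partial\omega(x) \neq \emptyset\}$ is convex, and such that $\omega$ restricted to $X^o$ is continuously differentiable and satisfies $\langle \nabla\omega(x') - \nabla\omega(x), x' - x\rangle \ge \alpha\|x'-x\|^2$ for all $x, x' \in X^o$. Fix such an $\omega$. $V(x,z) = \omega(z) - \omega(x) - \langle \nabla\omega(x), z - x\rangle$ and $P_x(\phi) = \arg\min_{z \in X}\{\langle \phi, z\rangle + V(x,z)\}$. *)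

(* Defs.v *)
From HB Require Import structures.
From mathcomp Require Import all_boot all_order all_algebra.
From mathcomp Require Import all_classical all_reals all_analysis.
Set Implicit Arguments. Unset Strict Implicit. Unset Printing Implicit Defensive.
Import Order.TTheory GRing.Theory Num.Theory.
Local Open Scope ring_scope.
Local Open Scope classical_set_scope.

Section Defs.
Variables (R : realType) (n : nat).
Local Notation vec := 'rV[R]_n.

Definition is_inner_product (ip : vec -> vec -> R) : Prop :=
  (forall x y, ip x y = ip y x) /\
  (forall a x y z, ip (a *: x + y) z = a * ip x z + ip y z) /\
  (forall x, x != 0 -> 0 < ip x x).

Definition is_norm (N : vec -> R) : Prop :=
  (forall x, N x = 0 -> x = 0) /\
  (forall a x, N (a *: x) = `|a| * N x) /\
  (forall x y, N (x + y) <= N x + N y).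

Definition dual_norm (ip : vec -> vec -> R) (N : vec -> R) (g : vec) : R :=
  sup [set ip g x | x in [set x | N x <= 1]].

Definition convex_in (X : set vec) : Prop :=
  forall x y t, X x -> X y -> 0 <= t <= 1 -> X (t *: x + (1 - t) *: y).

(* closedness w.r.t. the norm N (all norms on R^n are equivalent) *)
Definition closed_set (N : vec -> R) (X : set vec) : Prop :=
  forall x, (forall e, 0 < e -> exists y, X y /\ N (y - x) < e) -> X x.

Definition cont_on (N : vec -> R) (A : set vec) (f : vec -> vec) : Prop :=
  forall x, A x -> forall e, 0 < e -> exists d, 0 < d /\
    forall y, A y -> N (y - x) < d -> N (f y - f x) < e.

Definition contR_on (N : vec -> R) (A : set vec) (f : vec -> R) : Prop :=
  forall x, A x -> forall e, 0 < e -> exists d, 0 < d /\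
    forall y, A y -> N (y - x) < d -> `|f y - f x| < e.

Definition convex_fun (X : set vec) (w : vec -> R) : Prop :=
  forall x y t, X x -> X y -> 0 <= t <= 1 ->
    w (t *: x + (1 - t) *: y) <= t * w x + (1 - t) * w y.

Definition subgrad (ip : vec -> vec -> R) (X : set vec) (w : vec -> R)
  (x g : vec) : Prop :=
  forall z, X z -> w x + ip g (z - x) <= w z.

Definition Xo (ip : vec -> vec -> R) (X : set vec) (w : vec -> R) : set vec :=
  [set x | X x /\ exists g, subgrad ip X w x g].

Definition grad_on (ip : vec -> vec -> R) (N : vec -> R) (A : set vec)
  (w : vec -> R) (gw : vec -> vec) : Prop :=
  forall x, A x -> forall e, 0 < e -> exists d, 0 < d /\
    forall y, A y -> N (y - x) < d ->
      `|w y - w x - ip (gw x) (y - x)| <= e * N (y - x).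

Definition dgf (ip : vec -> vec -> R) (N : vec -> R) (X : set vec)
  (alpha : R) (w : vec -> R) (gw : vec -> vec) : Prop :=
  0 < alpha /\ convex_fun X w /\ contR_on N X w /\
      convex_in (Xo ip X w) /\
      cont_on N (Xo ip X w) gw /\ grad_on ip N (Xo ip X w) w gw /\
      forall x x', Xo ip X w x -> Xo ip X w x' ->
        alpha * N (x' - x) ^+ 2 <= ip (gw x' - gw x) (x' - x).

Definition Breg (ip : vec -> vec -> R) (w : vec -> R) (gw : vec -> vec)
  (x z : vec) : R :=
  w z - w x - ip (gw x) (z - x).

Definition is_prox (ip : vec -> vec -> R) (X : set vec) (w : vec -> R)
  (gw : vec -> vec) (x phi p : vec) : Prop :=
  X p /\ forall z, X z ->
    ip phi p + Breg ip w gw x p <= ip phi z + Breg ip w gw x z.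

Definition vi_sol (ip : vec -> vec -> R) (X : set vec) (F : vec -> vec)
  (xs : vec) : Prop :=
  X xs /\ forall z, X z -> 0 <= ip (F xs) (z - xs).

End Defs.

(* Main.v *)
Require Import Defs.
From HB Require Import structures.
From mathcomp Require Import all_boot all_order all_algebra.
From mathcomp Require Import all_classical all_reals all_analysis.
From mathcomp Require Import ring lra.
Import Order.TTheory GRing.Theory Num.Theory numFieldNormedType.Exports.
Set Implicit Arguments. Unset Strict Implicit. Unset Printing Implicit Defensive.
Local Open Scope ring_scope.
Local Open Scope classical_set_scope.


Section IP.
Variables (R : realType) (n : nat) (ip : 'rV[R]_n -> 'rV[R]_n -> R).
Hypothesis hip : is_inner_product ip.

Lemma ipC x y : ip x y = ip y x.
Proof. by case: hip. Qed.
Lemma ipL a x y z : ip (a *: x + y) z = a * ip x z + ip y z.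
Proof. by case: hip => _ []. Qed.
Lemma ip0l z : ip 0 z = 0.
Proof.
have := ipL 1 0 0 z; rewrite scaler0 addr0 mul1r => h; lra.
Qed.
Lemma ipDl x y z : ip (x + y) z = ip x z + ip y z.
Proof. by rewrite -(scale1r x) ipL mul1r scale1r. Qed.
Lemma ipZl a x z : ip (a *: x) z = a * ip x z.
Proof. by rewrite -(addr0 (a *: x)) ipL ip0l addr0. Qed.
Lemma ipNl x z : ip (- x) z = - ip x z.
Proof. by rewrite -scaleN1r ipZl mulN1r. Qed.
Lemma ipBl x y z : ip (x - y) z = ip x z - ip y z.
Proof. by rewrite ipDl ipNl. Qed.
Lemma ip0r z : ip z 0 = 0.
Proof. by rewrite ipC ip0l. Qed.
Lemma ipDr x y z : ip z (x + y) = ip z x + ip z y.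
Proof. by rewrite ipC ipDl !(ipC z). Qed.
Lemma ipZr a x z : ip z (a *: x) = a * ip z x.
Proof. by rewrite ipC ipZl ipC. Qed.
Lemma ipNr x z : ip z (- x) = - ip z x.
Proof. by rewrite ipC ipNl ipC. Qed.
Lemma ipBr x y z : ip z (x - y) = ip z x - ip z y.
Proof. by rewrite ipDr ipNr. Qed.
Lemma ip_ge0 x : 0 <= ip x x.
Proof.
have [->|x0] := eqVneq x 0; first by rewrite ip0l.
by case: hip => _ [_ /(_ x x0) /ltW].
Qed.
Lemma ip_eq0 x : ip x x = 0 -> x = 0.
Proof.
move=> h; apply/eqP; apply: contraT => x0.
by case: hip => _ [_ /(_ x x0)]; rewrite h ltxx.
Qed.

Lemma cauchy_schwarz a b : ip a b ^+ 2 <= ip a a * ip b b.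
Proof.
have [->|b0] := eqVneq b 0; first by rewrite !ip0r expr0n /= mulr0.
have hb : 0 < ip b b by case: hip => _ [_ /(_ b b0)].
set t := ip a b / ip b b.
have := ip_ge0 (a - t *: b).
rewrite !ipBl !ipBr !ipZl !ipZr (ipC b a).
rewrite /t => h.
have e : ip a a - ip a b / ip b b * ip a b -
      (ip a b / ip b b * ip a b - ip a b / ip b b * (ip a b / ip b b * ip b b))
      = ip a a - ip a b ^+ 2 / ip b b.
  by field; rewrite gt_eqF.
by rewrite e subr_ge0 ler_pdivrMr // in h.
Qed.

Definition En x := Num.sqrt (ip x x).

Lemma En_ge0 x : 0 <= En x. Proof. exact: sqrtr_ge0. Qed.
Lemma En_sq x : En x ^+ 2 = ip x x.
Proof. by rewrite sqr_sqrtr // ip_ge0. Qed.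
Lemma ip_le_En a b : ip a b <= En a * En b.
Proof.
have h := cauchy_schwarz a b.
rewrite -(ger0_norm (En_ge0 a)) -(ger0_norm (En_ge0 b)) -normrM.
apply: le_trans (ler_norm _) _.
rewrite -ler_sqr ?nnegrE ?normr_ge0 ?En_ge0 //.
by rewrite !real_normK ?num_real // exprMn !En_sq.
Qed.
Lemma abs_ip_le_En a b : `|ip a b| <= En a * En b.
Proof.
rewrite ler_norml ip_le_En andbT.
by rewrite lerNl -ipNl (le_trans (ip_le_En _ _)) // /En ipNl ipNr opprK.
Qed.
Lemma En_triangle x y : En (x + y) <= En x + En y.
Proof.
rewrite -ler_sqr ?nnegrE ?addr_ge0 ?En_ge0 //.
rewrite En_sq sqrrD !En_sq ipDl !ipDr (ipC y x).
have := ip_le_En x y; lra.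
Qed.
Lemma En_scale a x : En (a *: x) = `|a| * En x.
Proof.
by rewrite /En ipZl ipZr mulrA -expr2 sqrtrM ?sqr_ge0 // sqrtr_sqr.
Qed.
Lemma En_eq0 x : En x = 0 -> x = 0.
Proof. by move=> h; apply: ip_eq0; rewrite -En_sq h expr0n. Qed.
Lemma En_norm : is_norm En.
Proof. by split; [exact: En_eq0|split; [exact: En_scale|exact: En_triangle]]. Qed.

End IP.


Lemma within_cont_eps (R : realType) n (f : 'rV[R]_n -> R) (A : set 'rV[R]_n) :
  (forall x, A x -> forall e, 0 < e -> exists d, 0 < d /\
     forall y, A y -> `|y - x| < d -> `|f y - f x| < e) ->
  {within A, continuous f}.
Proof.
move=> H; apply/(@subspace_continuousP _ A _ f) => x Ax.
apply/cvgrPdist_lt => e e0.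
have [d [d0 Hd]] := H x Ax e e0.
rewrite near_withinE; near=> y => Ay.
rewrite distrC; apply: (Hd y Ay).
near: y. rewrite !near_simpl. apply/nbhs_normP. exists d => //= z. rewrite /ball_ /= => hz.
by rewrite distrC.
Unshelve. all: end_near.
Qed.

Lemma coord_le_norm (R : realType) n (u : 'rV[R]_n) j : `|u 0 j| <= `|u|.
Proof.
have /mapP[k Hk ->] : `|u 0 j| \in [seq `|u x.1 x.2| | x : 'I_1 * 'I_n].
  by apply/mapP; exists (0, j) => //=; rewrite mem_enum.
by rewrite [leRHS]/Num.norm /= mx_normrE; apply/bigmax_geP; right => /=; exists k.
Qed.

Section NormCmp.
Variables (R : realType) (n : nat) (P : 'rV[R]_n -> R).
Hypothesis hP : is_norm P.

Lemma P0 : P 0 = 0.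
Proof. by case: hP => _ [hZ _]; rewrite -(scale0r 0) hZ normr0 mul0r. Qed.
Lemma PN u : P (- u) = P u.
Proof. by case: hP => _ [hZ _]; rewrite -scaleN1r hZ normrN normr1 mul1r. Qed.
Lemma PZ a u : P (a *: u) = `|a| * P u.
Proof. by case: hP => _ []. Qed.
Lemma PD u v : P (u + v) <= P u + P v.
Proof. by case: hP => _ []. Qed.
Lemma P_ge0 u : 0 <= P u.
Proof. have := PD u (- u); rewrite subrr P0 PN => h; lra. Qed.
Lemma Peq0 u : P u = 0 -> u = 0.
Proof. by case: hP => h _; exact: h. Qed.
Lemma PB u v : P (u - v) = P (v - u).
Proof. by rewrite -PN opprB. Qed.
Lemma P_rev u v : `|P u - P v| <= P (u - v).
Proof.
rewrite ler_norml; apply/andP; split.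
  have := PD (v - u) u; rewrite subrK PB => h; lra.
have := PD (u - v) v; rewrite subrK => h; lra.
Qed.

Lemma P_sum (I : finType) (f : I -> 'rV[R]_n) :
  P (\sum_i f i) <= \sum_i P (f i).
Proof.
elim/big_rec2: _ => [|i a b _ hb]; first by rewrite P0.
by apply: le_trans (PD _ _) _; rewrite lerD2l.
Qed.

Lemma P_upper : exists C, 0 <= C /\ forall u, P u <= C * `|u|.
Proof.
exists (\sum_(j < n) P (delta_mx 0 j)); split.
  by apply: sumr_ge0 => j _; exact: P_ge0.
move=> u; rewrite {1}(row_sum_delta u).
apply: le_trans (P_sum _) _.
rewrite mulr_suml; apply: ler_sum => j _.
rewrite PZ mulrC; apply: ler_wpM2l; [exact: P_ge0|exact: coord_le_norm].
Qed.

Lemma P_within_cont (A : set 'rV[R]_n) : {within A, continuous P}.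
Proof.
have [C [C0 HC]] := P_upper.
apply: within_cont_eps => x Ax e e0.
exists (e / (C + 1)); split; first by rewrite divr_gt0 // ltr_wpDl.
move=> y Ay hy.
apply: le_lt_trans (P_rev _ _) _.
apply: le_lt_trans (HC _) _.
rewrite ltr_pdivlMr ?ltr_wpDl // in hy.
have := normr_ge0 (y - x); nra.
Qed.

Lemma P_lower : exists K, 0 < K /\ forall u, `|u| <= K * P u.
Proof.
pose S := [set u : 'rV[R]_n | `|u| = 1].
have cS : compact S.
  apply: bounded_closed_compact.
    exists 1; split => // M M1 u; rewrite /S /= => ->; exact: ltW.
  rewrite /closed => x /= hx; apply/eqP; apply: contraT => x1.
  have e0 : 0 < Num.norm (Num.norm x - 1) / 2 by rewrite divr_gt0 // normr_gt0 subr_eq0.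
  have [y [Sy /= bxy]] := hx _ (nbhsx_ballx x _ e0).
  move: bxy; rewrite -ball_normE /ball_ /= => bxy.
  have := ler_dist_dist x y; rewrite /S in Sy; rewrite Sy.
  move: bxy; set a := `|x - y|; set b := Num.norm (Num.norm x - 1); move=> h1 h2.
  have : b <= b / 2 by exact: le_trans h2 (ltW h1).
  have b0 : 0 < b by rewrite /b normr_gt0 subr_eq0.
  lra.
have [S0|S0] := pselect (S !=set0); last first.
  exists 1; split => // u; rewrite mul1r.
  have [->|u0] := eqVneq u 0; first by rewrite normr0 P_ge0.
  exfalso; apply: S0; exists (`|u|^-1 *: u); rewrite /S /= normrZ normrV ?unitfE ?normr_eq0 //.
  by rewrite normr_id mulVf // normr_eq0.
have [c cS' hc] := EVT_min_rV S0 cS (P_within_cont (A:=S)).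
have c0 : c != 0 by apply/eqP => c0; move: cS'; rewrite inE /S /= c0 normr0 => /eqP; rewrite eq_sym oner_eq0.
have Pc : 0 < P c.
  rewrite lt0r P_ge0 andbT; apply/eqP => /Peq0 h; by rewrite h eqxx in c0.
exists (P c)^-1; split; first by rewrite invr_gt0.
move=> u; have [->|u0] := eqVneq u 0; first by rewrite normr0 P0 mulr0.
have nu : 0 < `|u| by rewrite normr_gt0.
have : P c <= P (`|u|^-1 *: u).
  apply: hc; rewrite inE /S /= normrZ normrV ?unitfE ?normr_eq0 //.
  by rewrite normr_id mulVf // normr_eq0.
rewrite PZ normrV ?unitfE ?normr_eq0 // normr_id => h.
have h' := ler_wpM2l (ltW nu) h.
rewrite mulrA mulfV ?gt_eqF // mul1r in h'.
by rewrite mulrC ler_pdivlMr.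
Qed.

End NormCmp.


Section Dual.
Variables (R : realType) (n : nat) (ip : 'rV[R]_n -> 'rV[R]_n -> R) (N : 'rV[R]_n -> R).
Hypothesis hip : is_inner_product ip.
Hypothesis hN : is_norm N.

Lemma En_le_N : exists C, 0 <= C /\ forall u, En ip u <= C * N u.
Proof.
have [CE [CE0 hCE]] := P_upper (En_norm hip).
have [K [K0 hK]] := P_lower hN.
exists (CE * K); split; first by rewrite mulr_ge0 // ltW.
move=> u; apply: le_trans (hCE u) _; rewrite -mulrA; apply: ler_wpM2l => //.
Qed.

Lemma dual_has_sup g : has_sup [set ip g x | x in [set x | N x <= 1]].
Proof.
split; first by exists (ip g 0), 0 => //=; rewrite (P0 hN).
have [C [C0 hC]] := En_le_N.
exists (En ip g * C) => _ [x /= Nx <-].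
apply: le_trans (ip_le_En hip g x) _.
apply: ler_wpM2l; first exact: En_ge0.
apply: le_trans (hC x) _; rewrite -[leRHS]mulr1; exact: ler_wpM2l.
Qed.

Lemma dual_ge0 g : 0 <= dual_norm ip N g.
Proof.
apply: (sup_upper_bound (dual_has_sup g)).
by exists 0 => /=; [rewrite (P0 hN)|rewrite (ip0r hip)].
Qed.

Lemma ip_le_dual g u : ip g u <= dual_norm ip N g * N u.
Proof.
have [->|u0] := eqVneq u 0; first by rewrite (ip0r hip) (P0 hN) mulr0.
have Nu : 0 < N u.
  rewrite lt0r (P_ge0 hN) andbT; apply/eqP => /(Peq0 hN) h; by rewrite h eqxx in u0.
have : ip g ((N u)^-1 *: u) <= dual_norm ip N g.
  apply: (sup_upper_bound (dual_has_sup g)).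
  exists ((N u)^-1 *: u) => //=.
  by rewrite (PZ hN) ger0_norm ?invr_ge0 ?(ltW Nu) // mulVf // gt_eqF.
rewrite (ipZr hip) -ler_pdivlMl ?invr_gt0 // invrK => h.
by rewrite mulrC.
Qed.

End Dual.


Lemma ge0_eps (R : realType) (a c : R) : 0 <= c ->
  (forall e, 0 < e -> - (e * c) <= a) -> 0 <= a.
Proof.
move=> c0 h; rewrite leNgt; apply/negP => a0.
have e0 : 0 < - a / (c + 1) by rewrite divr_gt0 ?oppr_gt0 // ltr_wpDl.
have := h _ e0.
set t := - a / (c + 1).
have ht : t * (c + 1) = - a by rewrite /t divfK // gt_eqF // ltr_wpDl.
nra.
Qed.

Lemma ge0_t (R : realType) (a b : R) :
  (forall t, 0 < t -> t <= 1 -> 0 <= a + t * b) -> 0 <= a.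
Proof.
move=> h; rewrite leNgt; apply/negP => a0.
have [le1|gt1] := leP (- a / (`|b| + 1)) 1.
- set t := - a / (`|b| + 1) in le1 *.
  have t0 : 0 < t by rewrite divr_gt0 ?oppr_gt0 // ltr_wpDl.
  have := h _ t0 le1.
  have hb : b <= `|b| := ler_norm b.
  have := normr_ge0 b.
  have ht : t * (`|b| + 1) = - a by rewrite /t divfK // gt_eqF // ltr_wpDl.
  have htb : t * b <= t * `|b| := ler_wpM2l (ltW t0) hb.
  move=> h1 h2; clearbody t; lra.
- have := h 1 ltr01 (lexx _).
  rewrite ltr_pdivlMr ?ltr_wpDl // mul1r in gt1.
  have hb : b <= `|b| := ler_norm b.
  move=> h1; lra.
Qed.

Lemma ge_inv_nat (R : realType) (x y c : R) : 0 <= c ->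
  (forall m : nat, (0 < m)%N -> y - c / m%:R <= x) -> y <= x.
Proof.
move=> c0 h; rewrite -subr_ge0; apply: (@ge0_eps _ _ 1) => // e e0.
set m := (Num.truncn (c / e)).+1.
have := h m isT.
have hm : c / e < m%:R by exact: truncnS_gt.
have m0 : 0 < (m%:R : R) by rewrite ltr0n.
have : c < e * m%:R by rewrite -ltr_pdivrMl // mulrC.
rewrite -ltr_pdivrMr // => h1 h2.
lra.
Qed.

Lemma conv_eq (R : realType) n (t : R) (a b : 'rV[R]_n) :
  t *: b + (1 - t) *: a = a + t *: (b - a).
Proof. by rewrite scalerBl scale1r scalerBr addrCA. Qed.


Section Cvx.
Variables (R : realType) (n : nat) (ip : 'rV[R]_n -> 'rV[R]_n -> R)
  (N : 'rV[R]_n -> R) (X : set 'rV[R]_n) (alpha : R)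
  (w : 'rV[R]_n -> R) (gw : 'rV[R]_n -> 'rV[R]_n).
Hypothesis hip : is_inner_product ip.
Hypothesis hN : is_norm N.
Hypothesis hdgf : dgf ip N X alpha w gw.

Let Xoc : convex_in (Xo ip X w). Proof. by case: hdgf => _ [_ [_ []]]. Qed.
Let wconv : convex_fun X w. Proof. by case: hdgf => _ []. Qed.
Let ggrad : grad_on ip N (Xo ip X w) w gw.
Proof. by case: hdgf => _ [_ [_ [_ [_ []]]]]. Qed.
Let gmon : forall x x', Xo ip X w x -> Xo ip X w x' ->
        alpha * N (x' - x) ^+ 2 <= ip (gw x' - gw x) (x' - x).
Proof. by case: hdgf => _ [_ [_ [_ [_ []]]]]. Qed.

Lemma Xo_seg a b t : Xo ip X w a -> Xo ip X w b -> 0 <= t <= 1 ->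
  Xo ip X w (a + t *: (b - a)).
Proof. by move=> ha hb ht; rewrite -conv_eq; apply: Xoc. Qed.

Lemma small_t (d c : R) : 0 < d -> 0 <= c -> exists t, 0 < t /\ t <= 1 /\ t * c < d.
Proof.
move=> d0 c0; exists (Num.min 1 (d / (2 * (c + 1)))); split; last split.
- by rewrite lt_min ltr01 divr_gt0 // mulr_gt0 // ltr_wpDl.
- by rewrite ge_min lexx.
- have hm : Num.min 1 (d / (2 * (c + 1))) <= d / (2 * (c + 1)).
    by rewrite ge_min lexx orbT.
  apply: le_lt_trans (ler_wpM2r c0 hm) _.
  rewrite mulrAC ltr_pdivrMr ?mulr_gt0 ?ltr_wpDl //. nra.
Qed.

Lemma opt_Xo p g z : subgrad ip X w p g -> Xo ip X w p -> Xo ip X w z ->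
  0 <= ip (gw p - g) (z - p).
Proof.
move=> hg hp hz.
apply: (@ge0_eps _ _ (N (z - p))); first exact: P_ge0.
move=> e e0.
have [d [d0 hd]] := ggrad hp e0.
have [t [t0 [t1 htd]]] := small_t d0 (P_ge0 hN (z - p)).
have hy := Xo_seg hp hz (t:=t) (introT andP (conj (ltW t0) t1)).
have hyp : p + t *: (z - p) - p = t *: (z - p) by rewrite addrC addKr.
have hN' : N (p + t *: (z - p) - p) = t * N (z - p).
  by rewrite hyp (PZ hN) ger0_norm // ltW.
have h1 := hd _ hy; rewrite hN' in h1; have {h1} := h1 htd.
have h2 := hg _ hy.1.
rewrite hyp in h2 *.
rewrite (ipZr hip) in h2. rewrite (ipZr hip) (ipBl hip).
move=> h1.
have h3 : w (p + t *: (z - p)) - w p - t * ip (gw p) (z - p) <= e * (t * N (z - p)).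
  exact: le_trans (ler_norm _) h1.
have : t * (ip (gw p) (z - p) - ip g (z - p) + e * N (z - p)) >= 0 by nra.
rewrite pmulr_rge0 // => h4. lra.
Qed.

Lemma grad_ineq a b : Xo ip X w a -> Xo ip X w b ->
  w a + ip (gw a) (b - a) <= w b.
Proof.
move=> ha hb; rewrite -subr_ge0.
apply: (@ge0_eps _ _ (N (b - a))); first exact: P_ge0.
move=> e e0.
have [d [d0 hd]] := ggrad ha e0.
have [t [t0 [t1 htd]]] := small_t d0 (P_ge0 hN (b - a)).
have ht01 : 0 <= t <= 1 by rewrite (ltW t0) t1.
have hy := Xo_seg ha hb ht01.
have hyp : a + t *: (b - a) - a = t *: (b - a) by rewrite addrC addKr.
have hN' : N (a + t *: (b - a) - a) = t * N (b - a).
  by rewrite hyp (PZ hN) ger0_norm // ltW.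
have h1 := hd _ hy; rewrite hN' in h1; have {h1} := h1 htd.
rewrite hyp (ipZr hip) => h1.
have h3 : - (e * (t * N (b - a))) <= w (a + t *: (b - a)) - w a - t * ip (gw a) (b - a).
  by rewrite lerNl; apply: le_trans h1; rewrite -normrN ler_norm.
have h2 := wconv hb.1 ha.1 ht01.
rewrite conv_eq in h2.
have : t * (w b - (w a + ip (gw a) (b - a)) + e * N (b - a)) >= 0 by nra.
rewrite pmulr_rge0 // => h4. lra.
Qed.

Lemma strong a b : Xo ip X w a -> Xo ip X w b ->
  alpha / 2 * N (b - a) ^+ 2 <= Breg ip w gw a b.
Proof.
move=> ha hb.
set d := b - a; set G := ip (gw a) d; set Nd := N d.
apply: (@ge_inv_nat _ _ _ (alpha / 2 * Nd ^+ 2)).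
  by rewrite mulr_ge0 ?sqr_ge0 // divr_ge0 // ltW //; case: hdgf.
move=> m m0.
have mR : 0 < (m%:R : R) by rewrite ltr0n.
pose pt (i : nat) := a + (i%:R / m%:R) *: d.
have pt01 : forall i : nat, (i <= m)%N -> 0 <= (i%:R / m%:R : R) <= 1.
  move=> k km; apply/andP; split; [by rewrite divr_ge0 ?ler0n // ltW | by rewrite ler_pdivrMr // mul1r ler_nat].
have ptXo : forall i, (i <= m)%N -> Xo ip X w (pt i).
  by move=> i im; apply: Xo_seg => //; exact: pt01.
have claim : forall i, (i <= m)%N ->
   (i%:R / m%:R) * G + alpha * Nd ^+ 2 * (i%:R * (i%:R - 1) / 2) / m%:R ^+ 2
     <= w (pt i) - w a.
  elim=> [|i IH] im.
    by rewrite /pt !mul0r scale0r addr0 subrr mulr0 mul0r addr0.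
  have im' : (i <= m)%N by exact: ltnW.
  have IH' := IH im'.
  have g1 := grad_ineq (ptXo _ im') (ptXo _ im).
  have dpt : pt i.+1 - pt i = (m%:R^-1) *: d.
    rewrite /pt opprD addrACA subrr add0r -scalerBl; congr (_ *: _).
    by rewrite -mulrBl -natrB // subSnn mul1r.
  rewrite dpt (ipZr hip) in g1.
  have mon : alpha * (i%:R / m%:R) * Nd ^+ 2 <= ip (gw (pt i) - gw a) d.
    have [i0|i0] := eqVneq i 0%N.
      by rewrite i0 /pt !mul0r scale0r addr0 subrr (ip0l hip) mulr0 mul0r.
    have hm := gmon ha (ptXo _ im').
    have e1 : pt i - a = (i%:R / m%:R) *: d by rewrite /pt addrC addKr.
    rewrite e1 (PZ hN) (ipZr hip) ger0_norm in hm; last by case/andP: (pt01 _ im').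
    have ip0 : (0 : R) < i%:R / m%:R by rewrite divr_gt0 // ltr0n lt0n.
    set t := i%:R / m%:R in hm ip0 *.
    rewrite -(ler_pM2l ip0); apply: le_trans hm.
    by rewrite le_eqVlt; apply/orP; left; apply/eqP; rewrite exprMn /Nd; ring.
  rewrite (ipBl hip) -/G in mon.
  rewrite -addn1 in g1; rewrite -addn1 natrD.
  set s := i%:R in IH' mon g1 *; set u := (m%:R : R) in IH' mon g1 *.
  set W0 := w a in IH' *; set Wi := w (pt i) in IH' g1; set Wj := w (pt (i + 1)%N) in g1 *.
  set Q := ip (gw (pt i)) d in mon g1.
  have hu : u / u = 1 by rewrite divff // gt_eqF.
  clear -IH' mon g1 hu mR.
  have e2 : (s + 1) / u * G + alpha * Nd ^+ 2 * ((s + 1) * (s + 1 - 1) / 2) / u ^+ 2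
     = (s / u * G + alpha * Nd ^+ 2 * (s * (s - 1) / 2) / u ^+ 2)
       + u^-1 * G + u^-1 * (alpha * (s / u) * Nd ^+ 2).
    by field; rewrite gt_eqF.
  rewrite e2.
  have : u^-1 * (alpha * (s / u) * Nd ^+ 2) <= u^-1 * (Q - G).
    by apply: ler_wpM2l => //; rewrite invr_ge0 ltW.
  rewrite mulrBr => h; lra.
have := claim m (leqnn m).
rewrite /pt divff ?gt_eqF // mul1r scale1r /d (addrC a (b - a)) subrK -/d.
rewrite /Breg -/d -/G.
have e3 : alpha * Nd ^+ 2 * (m%:R * (m%:R - 1) / 2) / m%:R ^+ 2
   = alpha / 2 * Nd ^+ 2 - alpha / 2 * Nd ^+ 2 / m%:R.
  by field; rewrite gt_eqF.
rewrite e3 => h; lra.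
Qed.
End Cvx.


Section MinEx.
Variables (R : realType) (n : nat) (ip : 'rV[R]_n -> 'rV[R]_n -> R)
  (N : 'rV[R]_n -> R) (X : set 'rV[R]_n) (w : 'rV[R]_n -> R).
Hypothesis hip : is_inner_product ip.
Hypothesis hN : is_norm N.
Hypothesis hcl : closed_set N X.
Hypothesis hwc : contR_on N X w.

Lemma quad_diff x y z :
  ip (y - z) (y - z) - ip (x - z) (x - z) = ip (y - x) ((y - z) + (x - z)).
Proof.
rewrite ?(ipBl hip, ipBr hip, ipDl hip, ipDr hip).
rewrite (ipC hip z y) (ipC hip z x) (ipC hip x y).
ring.
Qed.

Lemma min_exists p g z M : subgrad ip X w p g -> X p -> X z -> 0 < M ->
  exists m, X m /\ forall u, X u ->
    w m + M * ip (m - z) (m - z) <= w u + M * ip (u - z) (u - z).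
Proof.
move=> hg Xp Xz M0.
pose Phi u := w u + M * ip (u - z) (u - z).
have [CE [CE0 hCE]] := P_upper (En_norm hip).
have [KE [KE0 hKE]] := P_lower (En_norm hip).
have [CN [CN0 hCN]] := P_upper hN.
set Eg := En ip g.
set A := w z - w p + Eg * En ip (z - p).
set B := 1 + (`|A| + Eg) / M.
set Bd := KE * B + `|z|.
have Eg0 : 0 <= Eg by exact: En_ge0.
have B0 : 0 <= B by rewrite addr_ge0 // divr_ge0 ?addr_ge0 // ltW.
have sub_bound : forall u, X u -> Phi u <= w z -> `|u| <= Bd.
  move=> u Xu hu.
  set r := En ip (u - z).
  have r0 : 0 <= r by exact: En_ge0.
  have h1 := hg _ Xu.
  have h2 : ip g (u - p) >= - (Eg * (r + En ip (z - p))).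
    rewrite lerNl -(ipNr hip); apply: le_trans (ip_le_En hip _ _) _.
    apply: ler_wpM2l => //; rewrite opprB.
    have -> : p - u = (z - u) + (p - z) by rewrite [RHS]addrC addrA subrK.
    apply: le_trans (En_triangle hip _ _) _.
    by rewrite -(PN (En_norm hip) (z - u)) opprB -(PN (En_norm hip) (p - z)) opprB.
  have h3 : M * r ^+ 2 <= A + Eg * r.
    move: hu; rewrite /Phi -(En_sq hip) -/r => hu.
    rewrite /A; nra.
  have hr : r <= B.
    have [r1|r1] := leP r 1; first by rewrite /B ler_wpDr // divr_ge0 ?addr_ge0 // ltW.
    have hA : A <= `|A| := ler_norm A.
    have hAr : `|A| <= `|A| * r by rewrite ler_peMr // ltW.
    have : M * r ^+ 2 <= (`|A| + Eg) * r by rewrite mulrDl; lra.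
    rewrite expr2 mulrA ler_pM2r ?(lt_trans ltr01) // => h4.
    rewrite /B -ler_pdivlMl // in h4.
    apply: le_trans h4 _; rewrite mulrC ler_wpDl //.
  rewrite /Bd.
  have -> : u = (u - z) + z by rewrite subrK.
  apply: le_trans (ler_normD _ _) _.
  rewrite lerD2r; apply: le_trans (hKE _) _.
  by apply: ler_wpM2l => //; apply: ltW.
pose K := [set u | X u /\ `|u| <= Bd].
have cK : compact K.
  apply: bounded_closed_compact.
    exists Bd; split; first exact: num_real.
    by move=> M' hM' u [_ hu]; apply: ltW (le_lt_trans hu hM').
  rewrite /closed => x /= hx; split.
    apply: hcl => e e0.
    have e1 : 0 < e / (CN + 1) by rewrite divr_gt0 // ltr_wpDl.
    have [y [[Xy _] /= bxy]] := hx _ (nbhsx_ballx x _ e1).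
    move: bxy; rewrite -ball_normE /ball_ /= => bxy.
    exists y; split => //.
    apply: le_lt_trans (hCN _) _.
    rewrite distrC ltr_pdivlMr ?ltr_wpDl // in bxy.
    have := normr_ge0 (y - x); nra.
  rewrite leNgt; apply/negP => hx1.
  have e0 : 0 < `|x| - Bd by rewrite subr_gt0.
  have [y [[_ hy] /= bxy]] := hx _ (nbhsx_ballx x _ e0).
  move: bxy; rewrite -ball_normE /ball_ /= => bxy.
  have := ler_normD y (x - y); rewrite addrC subrK => h.
  lra.
have K0 : K !=set0.
  exists z; split => //; rewrite /Bd ler_wpDl // mulr_ge0 //; exact: ltW.
have cPhi : {within K, continuous Phi}.
  apply: within_cont_eps => x [Xx _] e e0.
  have e2 : 0 < e / 2 by rewrite divr_gt0.
  have [dN [dN0 hdN]] := hwc Xx e2.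
  set L := CE * (CE + 2 * En ip (x - z)).
  have L0 : 0 <= L by rewrite mulr_ge0 // addr_ge0 // mulr_ge0 // En_ge0.
  set dq := Num.min 1 (e / (2 * (M * (L + 1)))).
  set d := Num.min (dN / (CN + 1)) dq.
  have dq0 : 0 < dq by rewrite lt_min ltr01 divr_gt0 // mulr_gt0 // mulr_gt0 // ltr_wpDl.
  exists d; split; first by rewrite lt_min divr_gt0 // ltr_wpDl.
  move=> y [Xy _] hyx.
  have hy1 : `|y - x| < dN / (CN + 1) by apply: lt_le_trans hyx _; rewrite ge_min lexx.
  have hy2 : `|y - x| < dq by apply: lt_le_trans hyx _; rewrite ge_min lexx orbT.
  have hy3 : `|y - x| < 1 by apply: lt_le_trans hy2 _; rewrite ge_min lexx.
  have hy4 : `|y - x| < e / (2 * (M * (L + 1))) by apply: lt_le_trans hy2 _; rewrite ge_min lexx orbT.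
  have hNyx : N (y - x) < dN.
    apply: le_lt_trans (hCN _) _.
    rewrite ltr_pdivlMr ?ltr_wpDl // in hy1.
    have := normr_ge0 (y - x); nra.
  have hw := hdN _ Xy hNyx.
  have hq : `|ip (y - z) (y - z) - ip (x - z) (x - z)| <= L * `|y - x|.
    rewrite quad_diff; apply: le_trans (abs_ip_le_En hip _ _) _.
    have ha := hCE (y - x).
    have hb : En ip (y - z + (x - z)) <= CE * `|y - x| + 2 * En ip (x - z).
      have -> : y - z + (x - z) = (y - x) + (x - z) + (x - z).
        by rewrite (addrA (y - x) x) subrK.
      apply: le_trans (En_triangle hip _ _) _.
      have t1 := En_triangle hip (y - x) (x - z); lra.
    have hE0 := En_ge0 ip (y - x).
    have hE1 := En_ge0 ip (y - z + (x - z)).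
    have hnx := normr_ge0 (y - x).
    have hEx := En_ge0 ip (x - z).
    rewrite /L.
    have hb' : En ip (y - z + (x - z)) <= CE + 2 * En ip (x - z).
      apply: le_trans hb _; rewrite lerD2r -[leRHS]mulr1; apply: ler_wpM2l => //; exact: ltW.
    have := ler_pM hE0 hE1 ha hb'.
    move=> h; apply: le_trans h _; rewrite mulrC mulrA [_ * CE]mulrC; apply: lexx.
  rewrite /Phi.
  have -> : w y + M * ip (y - z) (y - z) - (w x + M * ip (x - z) (x - z)) =
            (w y - w x) + M * (ip (y - z) (y - z) - ip (x - z) (x - z)) by ring.
  apply: le_lt_trans (ler_normD _ _) _.
  rewrite normrM gtr0_norm //.
  have hq2 : M * `|ip (y - z) (y - z) - ip (x - z) (x - z)| <= M * (L * `|y - x|).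
    by apply: ler_wpM2l => //; exact: ltW.
  have hq3 : M * (L * `|y - x|) < e / 2.
    rewrite ltr_pdivlMr ?mulr_gt0 ?ltr_wpDl // in hy4.
    have := normr_ge0 (y - x); nra.
  lra.
have [c cK' hc] := EVT_min_rV K0 cK cPhi.
rewrite inE in cK'.
exists c; split; first by case: cK'.
move=> u Xu.
have hcz : Phi c <= Phi z.
  apply: hc; rewrite inE; split => //; rewrite /Bd ler_wpDl // mulr_ge0 //; exact: ltW.
have Phiz : Phi z = w z by rewrite /Phi subrr (ip0l hip) mulr0 addr0.
have [hu|hu] := leP (Phi u) (w z).
  by apply: hc; rewrite inE; split => //; exact: sub_bound.
by apply: le_trans hcz _; rewrite Phiz ltW.
Qed.

End MinEx.


Section Opt.
Variables (R : realType) (n : nat) (ip : 'rV[R]_n -> 'rV[R]_n -> R)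
  (N : 'rV[R]_n -> R) (X : set 'rV[R]_n) (alpha : R)
  (w : 'rV[R]_n -> R) (gw : 'rV[R]_n -> 'rV[R]_n).
Hypothesis hip : is_inner_product ip.
Hypothesis hN : is_norm N.
Hypothesis hXc : convex_in X.
Hypothesis hcl : closed_set N X.
Hypothesis hdgf : dgf ip N X alpha w gw.

Let wconv : convex_fun X w. Proof. by case: hdgf => _ []. Qed.
Let hwc : contR_on N X w. Proof. by case: hdgf => _ [_ []]. Qed.

Lemma ip_expand (A B : 'rV[R]_n) t :
  ip (A + t *: B) (A + t *: B) = ip A A + 2 * t * ip A B + t ^+ 2 * ip B B.
Proof.
rewrite (ipDl hip) !(ipDr hip) !(ipZl hip) !(ipZr hip) (ipC hip B A); ring.
Qed.

Lemma min_subgrad m z M : 0 < M -> X m ->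
  (forall u, X u -> w m + M * ip (m - z) (m - z) <= w u + M * ip (u - z) (u - z)) ->
  subgrad ip X w m ((2 * M) *: (z - m)).
Proof.
move=> M0 Xm hm u Xu.
set a := ip (m - z) (u - m); set q := ip (u - m) (u - m).
suff : 0 <= w u - w m + 2 * M * a.
  have ha : ip (z - m) (u - m) = - a by rewrite -(ipNl hip) opprB.
  rewrite (ipZl hip) ha => h; lra.
apply: (@ge0_t _ _ (M * q)) => t t0 t1.
have ht : 0 <= t <= 1 by rewrite (ltW t0) t1.
have Xy := hXc Xu Xm ht.
have hc := wconv Xu Xm ht.
have h := hm _ Xy.
rewrite conv_eq in Xy hc h.
have e1 : m + t *: (u - m) - z = (m - z) + t *: (u - m) by rewrite addrAC.
rewrite e1 in h.
rewrite ip_expand -/a -/q in h.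
have : 0 <= t * (w u - w m + 2 * M * a + t * (M * q)) by nra.
by rewrite pmulr_rge0.
Qed.

Lemma opt_general p g z : subgrad ip X w p g -> Xo ip X w p -> X z ->
  0 <= ip (gw p - g) (z - p).
Proof.
move=> hg hp Xz.
set a := gw p - g.
apply: (@ge0_eps _ _ (En ip a)); first exact: En_ge0.
move=> e e0.
set Aq := w z - w p - ip g (z - p).
have Aq0 : 0 <= Aq by have := hg _ Xz; rewrite /Aq => h; lra.
set G := En ip g.
have G0 : 0 <= G by exact: En_ge0.
set M := (Aq + G * e + e ^+ 2) / e ^+ 2.
have M0 : 0 < M by rewrite divr_gt0 ?exprn_gt0 // ltr_wpDl ?exprn_gt0 // addr_ge0 // mulr_ge0 // ltW.
have hMe : M * e ^+ 2 = Aq + G * e + e ^+ 2 by rewrite /M divfK // expf_neq0 // gt_eqF.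
have [m [Xm hm]] := min_exists hip hN hcl hwc hg hp.1 Xz M0.
have hsg := min_subgrad M0 Xm hm.
have mXo : Xo ip X w m by split => //; eexists; exact: hsg.
have h1 := opt_Xo hip hN hdgf hg hp mXo.
set r := En ip (m - z).
have r0 : 0 <= r by exact: En_ge0.
have hr : r <= e.
  rewrite leNgt; apply/negP => re.
  have := hm _ Xz; rewrite subrr (ip0l hip) mulr0 addr0 -(En_sq hip) -/r => hmz.
  have hgm := hg _ Xm.
  have hgm2 : ip g (m - p) = ip g (z - p) + ip g (m - z).
    by rewrite -(ipDr hip) [(z - p) + _]addrC addrA subrK.
  have hgm3 : - (G * r) <= ip g (m - z).
    rewrite lerNl -(ipNr hip); apply: le_trans (ip_le_En hip _ _) _.
    by rewrite -/G (PN (En_norm hip)).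
  have hb : M * r ^+ 2 <= Aq + G * r by rewrite /Aq; lra.
  have k1 : M * (e * r) <= M * r ^+ 2.
    by rewrite ler_pM2l // expr2 ler_pM2r // ?ltW // (lt_trans e0).
  have k2 : M * (e * r) = (Aq + G * e + e ^+ 2) * (r / e).
    by rewrite -hMe; field; rewrite gt_eqF.
  have k3 : Aq <= Aq * (r / e).
    by rewrite ler_peMr // ler_pdivlMr // mul1r ltW.
  have k4 : (Aq + G * e + e ^+ 2) * (r / e) = Aq * (r / e) + G * r + e * r.
    by field; rewrite gt_eqF.
  have k5 : 0 < e * r by rewrite mulr_gt0 // (lt_trans e0).
  lra.
have -> : z - p = (m - p) + (z - m) by rewrite [RHS]addrC addrA subrK.
rewrite (ipDr hip).
have h2 : - (En ip a * r) <= ip a (z - m).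
  rewrite lerNl -(ipNr hip) opprB; apply: le_trans (ip_le_En hip _ _) _.
  by rewrite -/r.
have h3 : En ip a * r <= En ip a * e by apply: ler_wpM2l => //; exact: En_ge0.
lra.
Qed.

Lemma prox_subgrad x phi p : is_prox ip X w gw x phi p ->
  subgrad ip X w p (gw x - phi).
Proof.
move=> [Xp hp] u Xu.
have := hp _ Xu; rewrite /Breg.
rewrite !(ipBl hip) !(ipBr hip) => h; lra.
Qed.

Lemma prox_Xo x phi p : is_prox ip X w gw x phi p -> Xo ip X w p.
Proof. by move=> hp; split; [case: hp|eexists; exact: prox_subgrad hp]. Qed.

Lemma three_point x phi p z : is_prox ip X w gw x phi p -> X z ->
  ip phi (p - z) <= Breg ip w gw x z - Breg ip w gw p z - Breg ip w gw x p.
Proof.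
move=> hp Xz.
have h := opt_general (prox_subgrad hp) (prox_Xo hp) Xz.
rewrite /Breg; move: h.
rewrite !(ipBl hip) !(ipBr hip) => h; lra.
Qed.

End Opt.


Section Main.
Variables (R : realType) (n : nat) (ip : 'rV[R]_n -> 'rV[R]_n -> R)
  (N : 'rV[R]_n -> R) (X : set 'rV[R]_n) (F : 'rV[R]_n -> 'rV[R]_n)
  (alpha : R) (w : 'rV[R]_n -> R) (gw : 'rV[R]_n -> 'rV[R]_n)
  (xk yk xk1 xs : 'rV[R]_n) (gam : R).
Hypothesis hip : is_inner_product ip.
Hypothesis hN : is_norm N.
Hypothesis hXc : convex_in X.
Hypothesis hcl : closed_set N X.
Hypothesis hdgf : dgf ip N X alpha w gw.
Hypothesis hxs : vi_sol ip X F xs.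
Hypothesis hmono : forall z, X z -> 0 <= ip (F z) (z - xs).
Hypothesis hx : Xo ip X w xk.
Hypothesis hg : 0 < gam.
Hypothesis hpy : is_prox ip X w gw xk (gam *: F xk) yk.
Hypothesis hpx : is_prox ip X w gw xk (gam *: F yk) xk1.

Let V := Breg ip w gw.
Let D := dual_norm ip N (F xk - F yk).
Let Delta := V xk xs - V xk1 xs.

Lemma core :
  V xk yk + alpha / 2 * N (xk1 - yk) ^+ 2 - gam * (D * N (xk1 - yk)) <= Delta.
Proof.
have Xxs : X xs by case: hxs.
have yXo := prox_Xo hip hpy.
have x1Xo := prox_Xo hip hpx.
have h1 := three_point hip hN hXc hcl hdgf hpx Xxs.
have h2 := three_point hip hN hXc hcl hdgf hpy x1Xo.1.
have h3 := hmono yXo.1.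
have h4 := strong hip hN hdgf yXo x1Xo.
have h5 := ip_le_dual hip hN (F xk - F yk) (xk1 - yk).
rewrite (ipZl hip) in h1; rewrite (ipZl hip) in h2.
have e1 : ip (F yk) (xk1 - xs) = ip (F yk) (xk1 - yk) + ip (F yk) (yk - xs).
  by rewrite -(ipDr hip) addrA subrK.
have e2 : ip (F xk) (yk - xk1) = - ip (F xk) (xk1 - yk).
  by rewrite -(ipNr hip) opprB.
rewrite (ipBl hip) in h5.
rewrite e1 in h1; rewrite e2 in h2.
have h6 : gam * (ip (F xk) (xk1 - yk) - ip (F yk) (xk1 - yk)) <= gam * (D * N (xk1 - yk)).
  by apply: ler_wpM2l => //; exact: ltW.
have h7 : 0 <= gam * ip (F yk) (yk - xs) by rewrite mulr_ge0 // ltW.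
rewrite /Delta /V.

lra.
Qed.

Lemma sq_bound (r d : R) : 0 < alpha ->
  alpha / 2 * r ^+ 2 - gam * (d * r) >= - (gam ^+ 2 / (2 * alpha)) * d ^+ 2.
Proof.
move=> a0.
have e : alpha / 2 * r ^+ 2 - gam * (d * r) + (gam ^+ 2 / (2 * alpha)) * d ^+ 2
   = (alpha * r - gam * d) ^+ 2 / (2 * alpha).
  by field; rewrite gt_eqF.
have : 0 <= (alpha * r - gam * d) ^+ 2 / (2 * alpha).
  by rewrite divr_ge0 ?sqr_ge0 // mulr_ge0 // ltW.
rewrite -e; lra.
Qed.

Lemma part_a :
  - (gam ^+ 2 / (2 * alpha)) * D ^+ 2 + V xk yk <= Delta.
Proof.
have a0 : 0 < alpha by case: hdgf.
have := core; have := sq_bound (N (xk1 - yk)) D a0; lra.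
Qed.

Lemma N_sq_le : N (xk - yk) ^+ 2 <= 2 / alpha * V xk yk.
Proof.
have a0 : 0 < alpha by case: hdgf.
have yXo := prox_Xo hip hpy.
have h := strong hip hN hdgf hx yXo.
rewrite (PB hN) in h.
have ha2 : 0 < alpha / 2 by rewrite divr_gt0.
rewrite -(ler_pM2l ha2); apply: le_trans h _.
rewrite /V le_eqVlt; apply/orP; left; apply/eqP; field.
by rewrite gt_eqF.
Qed.

Lemma V_ge0 : 0 <= V xk yk.
Proof.
have a0 : 0 < alpha by case: hdgf.
apply: le_trans (strong hip hN hdgf hx (prox_Xo hip hpy)).
by rewrite mulr_ge0 ?sqr_ge0 // divr_ge0 // ltW.
Qed.

Lemma part_c L : 0 < L ->
  (forall u v, X u -> X v -> dual_norm ip N (F u - F v) <= L * N (u - v)) ->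
  (1 - L ^+ 2 * gam ^+ 2 / alpha ^+ 2) * V xk yk <= Delta.
Proof.
move=> L0 hL.
have a0 : 0 < alpha by case: hdgf.
have hD : D <= L * N (xk - yk) := hL _ _ hx.1 (prox_Xo hip hpy).1.
have D0 : 0 <= D := dual_ge0 hip hN _.
have hD2 : D ^+ 2 <= L ^+ 2 * N (xk - yk) ^+ 2.
  rewrite -exprMn; apply: lerXn2r; rewrite ?nnegrE //; apply: mulr_ge0; [exact: ltW|exact: P_ge0].
have hN2 := N_sq_le.
have hD3 : D ^+ 2 <= L ^+ 2 * (2 / alpha * V xk yk).
  apply: le_trans hD2 _; apply: ler_wpM2l; [exact: sqr_ge0 | exact: hN2].
have hc : gam ^+ 2 / (2 * alpha) * D ^+ 2 <= gam ^+ 2 / (2 * alpha) * (L ^+ 2 * (2 / alpha * V xk yk)).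
  by apply: ler_wpM2l => //; rewrite divr_ge0 ?sqr_ge0 // mulr_ge0 // ltW.
have e : gam ^+ 2 / (2 * alpha) * (L ^+ 2 * (2 / alpha * V xk yk)) = L ^+ 2 * gam ^+ 2 / alpha ^+ 2 * V xk yk.
  by field; rewrite gt_eqF.
have := part_a.
rewrite e in hc; lra.
Qed.

Lemma part_b L nu : 0 < L -> 0 < nu <= 1 ->
  (forall u v, X u -> X v -> dual_norm ip N (F u - F v) <= L * N (u - v) `^ nu) ->
  V xk yk - 2 `^ (nu - 1) * L ^+ 2 * gam ^+ 2 * alpha `^ (- (1 + nu))
    * V xk yk `^ nu <= Delta.
Proof.
move=> L0 /andP[nu0 nu1] hL.
have a0 : 0 < alpha by case: hdgf.
set a := N (xk - yk); set Vv := V xk yk.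
have aa0 : 0 <= a by exact: P_ge0.
have V0 : 0 <= Vv by exact: V_ge0.
have hD : D <= L * a `^ nu := hL _ _ hx.1 (prox_Xo hip hpy).1.
have D0 : 0 <= D := dual_ge0 hip hN _.
have hD2 : D ^+ 2 <= L ^+ 2 * (a `^ nu) ^+ 2.
  rewrite -exprMn; apply: lerXn2r; rewrite ?nnegrE //; apply: mulr_ge0; [exact: ltW|exact: powR_ge0].
have pw : (a `^ nu) ^+ 2 = (a ^+ 2) `^ nu.
  rewrite -(powR_mulrn 2 (powR_ge0 a nu)) -powRrM mulrC powRrM powR_mulrn //.
have hN2 : a ^+ 2 <= 2 / alpha * Vv := N_sq_le.
have mono : (a ^+ 2) `^ nu <= (2 / alpha * Vv) `^ nu.
  apply: (ge0_ler_powR (ltW nu0)); rewrite ?nnegrE //; first exact: sqr_ge0.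
  by rewrite mulr_ge0 // divr_ge0 // ltW.
have sp : (2 / alpha * Vv) `^ nu = 2 `^ nu * (alpha `^ nu)^-1 * Vv `^ nu.
  rewrite powRM // ?divr_ge0 ?ltW // powRM ?invr_ge0 ?ltW //.
  by rewrite -powR_inv1 ?ltW // -powRrM mulN1r powRN.
have c1 : 2 `^ (nu - 1) = 2 `^ nu / 2 :> R.
  rewrite powRB ?powRr1 //; apply/implyP => _; by rewrite pnatr_eq0.
have c2 : alpha `^ (- (1 + nu)) = (alpha * alpha `^ nu)^-1.
  rewrite powRN powRD ?powRr1 ?ltW //; apply/implyP => _; by rewrite gt_eqF.
have an0 : 0 < alpha `^ nu by exact: powR_gt0.
have hc : gam ^+ 2 / (2 * alpha) * D ^+ 2 <=
    gam ^+ 2 / (2 * alpha) * (L ^+ 2 * (2 `^ nu * (alpha `^ nu)^-1 * Vv `^ nu)).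
  apply: ler_wpM2l; first by rewrite divr_ge0 ?sqr_ge0 // mulr_ge0 // ltW.
  apply: le_trans hD2 _; apply: ler_wpM2l; first exact: sqr_ge0.
  by rewrite pw -sp.
have e : gam ^+ 2 / (2 * alpha) * (L ^+ 2 * (2 `^ nu * (alpha `^ nu)^-1 * Vv `^ nu))
   = 2 `^ (nu - 1) * L ^+ 2 * gam ^+ 2 * alpha `^ (- (1 + nu)) * Vv `^ nu.
  rewrite c1 c2; field; rewrite !gt_eqF //.
have := part_a.
rewrite -/Vv.
rewrite e in hc; lra.
Qed.

End Main.

Unset Implicit Arguments. Set Strict Implicit.

Theorem lemma5 (R : realType) (n : nat) (ip : 'rV[R]_n -> 'rV[R]_n -> R)
  (N : 'rV[R]_n -> R) (X : set 'rV[R]_n) (F : 'rV[R]_n -> 'rV[R]_n)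
  (alpha : R) (w : 'rV[R]_n -> R) (gw : 'rV[R]_n -> 'rV[R]_n)
  (x y : nat -> 'rV[R]_n) (gamma : nat -> R) :
  is_inner_product ip -> is_norm N ->
  convex_in X -> closed_set N X -> cont_on N X F ->
  (exists xs, vi_sol ip X F xs) ->
  (forall xs, vi_sol ip X F xs -> forall z, X z -> 0 <= ip (F z) (z - xs)) ->
  dgf ip N X alpha w gw ->
  Xo ip X w (x 1%N) ->
  (forall k, (0 < k)%N -> 0 < gamma k) ->
  (forall k, (0 < k)%N -> is_prox ip X w gw (x k) (gamma k *: F (x k)) (y k)) ->
  (forall k, (0 < k)%N -> is_prox ip X w gw (x k) (gamma k *: F (y k)) (x k.+1)) ->
  (* (a) *)
  (exists xs, vi_sol ip X F xs /\ forall k, (0 < k)%N ->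
     - (gamma k ^+ 2 / (2 * alpha)) * dual_norm ip N (F (x k) - F (y k)) ^+ 2
       + Breg ip w gw (x k) (y k)
     <= Breg ip w gw (x k) xs - Breg ip w gw (x k.+1) xs)
  /\
  (* (b) Hoelder continuous F *)
  (forall (L nu : R), 0 < L -> 0 < nu <= 1 ->
     (forall u v, X u -> X v -> dual_norm ip N (F u - F v) <= L * N (u - v) `^ nu) ->
     exists xs, vi_sol ip X F xs /\ forall k, (0 < k)%N ->
       Breg ip w gw (x k) (y k)
       - 2 `^ (nu - 1) * L ^+ 2 * gamma k ^+ 2 * alpha `^ (- (1 + nu))
         * Breg ip w gw (x k) (y k) `^ nu
       <= Breg ip w gw (x k) xs - Breg ip w gw (x k.+1) xs)
  /\
  (* (b), Lipschitz case nu = 1 *)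
  (forall L : R, 0 < L ->
     (forall u v, X u -> X v -> dual_norm ip N (F u - F v) <= L * N (u - v)) ->
     exists xs, vi_sol ip X F xs /\ forall k, (0 < k)%N ->
       (1 - L ^+ 2 * gamma k ^+ 2 / alpha ^+ 2) * Breg ip w gw (x k) (y k)
       <= Breg ip w gw (x k) xs - Breg ip w gw (x k.+1) xs).
Proof.
move=> hip hN hXc hcl _ [xs hxs] hmono hdgf hx1 hgam hpy hpx.
have hm := hmono xs hxs.
have xXo : forall k, (0 < k)%N -> Xo ip X w (x k).
  case=> [//|k] _; case: k => [|k]; first exact: hx1.
  have h := hpx k.+1 isT; exact: (prox_Xo hip h).
split; [|split].
- exists xs; split => // k k0.
  apply: (part_a hip hN hXc hcl hdgf hxs hm);
    by [apply: hgam | apply: hpy | apply: hpx | apply: xXo | exact: L0 | exact: hnu | exact: hL].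
- move=> L nu L0 hnu hL; exists xs; split => // k k0.
  apply: (part_b hip hN hXc hcl hdgf hxs hm);
    by [apply: hgam | apply: hpy | apply: hpx | apply: xXo | exact: L0 | exact: hnu | exact: hL].
- move=> L L0 hL; exists xs; split => // k k0.
  apply: (part_c hip hN hXc hcl hdgf hxs hm);
    by [apply: hgam | apply: hpy | apply: hpx | apply: xXo | exact: L0 | exact: hnu | exact: hL].
Qed.
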